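(* Let $R$ be a commutative Artinian ring and $M$ a non-zero $R$-module. Let $\sum_{i=1}^n N_i=M=\sum_{j=1}^m K_j$ be two minimal PS-hollow representations of $M$, where $N_i$ is $H_i$-PS-hollow for each $i\in\{1,\dots,n\}$ and $K_j$ is $H'_j$-PS-hollow for each $j\in\{1,\dots,m\}$. Then $n=m$, $\{H_1,\dots,H_n\}=\{H'_1,\dots,H'_n\}$, and $In(N_i)=In(K_j)$ whenever $H_i=H'_j$.
   Context: All rings are commutative with unity. An $R$-submodule $N\leq M$ is PS-hollow iff for every ideal $I\leq R$ and every submodule $L\leq M$: $N\subseteq IM+L$ implies $N\subseteq IM$ or $N\subseteq L$. For a PS-hollow $N\leq M$ put $A_N=\{I\leq R: N\subseteq IM\}$, $H_N$ the set of minimal elements of $A_N$ (w.r.t. inclusion), and $In(N)=\bigcap_{I\in H_N} IM$ ($=M$ if $H_N=\emptyset$). For a set $H$ of ideals, $N$ is $H$-PS-hollow iff $N$ is PS-hollow and $H_N=H$. A minimal PS-hollow representation of $M$ is an expression $M=\sum_{i=1}^n N_i$ with each $N_i$ $H_i$-PS-hollow, such that $In(N_1),\dots,In(N_n)$ are pairwise incomparable and $N_j\not\subseteq\sum_{i\neq j}N_i$ for every $j$. *)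

(* Defs.v *)
From mathcomp Require Import all_boot all_algebra.
Set Implicit Arguments. Unset Strict Implicit. Unset Printing Implicit Defensive.
Import GRing.Theory.
Local Open Scope ring_scope.

Section PSHollow.
Variables (R : comNzRingType) (M : lmodType R).

Definition subsetM (A B : M -> Prop) : Prop := forall x, A x -> B x.

Definition is_ideal (I : R -> Prop) : Prop :=
  [/\ I 0, (forall a b, I a -> I b -> I (a + b)) & (forall r a, I a -> I (r * a))].

Definition is_submodule (N : M -> Prop) : Prop :=
  [/\ N 0, (forall a b, N a -> N b -> N (a + b)) & (forall (r : R) a, N a -> N (r *: a))].

Definition IM (I : R -> Prop) : M -> Prop :=
  fun x => exists s : seq (R * M),
    (forall p, p \in s -> I p.1) /\ x = \sum_(p <- s) p.1 *: p.2.

Definition addS (A B : M -> Prop) : M -> Prop :=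
  fun x => exists a b, A a /\ B b /\ x = a + b.

Definition sumS (n : nat) (N : 'I_n -> M -> Prop) : M -> Prop :=
  fun x => exists f : 'I_n -> M, (forall i, N i (f i)) /\ x = \sum_(i < n) f i.

Definition sumS_but (n : nat) (N : 'I_n -> M -> Prop) (j : 'I_n) : M -> Prop :=
  fun x => exists f : 'I_n -> M, (forall i, i != j -> N i (f i)) /\
                                 x = \sum_(i < n | i != j) f i.

Definition PS_hollow (N : M -> Prop) : Prop :=
  is_submodule N /\
  forall (I : R -> Prop) (L : M -> Prop), is_ideal I -> is_submodule L ->
    subsetM N (addS (IM I) L) -> subsetM N (IM I) \/ subsetM N L.

Definition A_N (N : M -> Prop) (I : R -> Prop) : Prop :=
  is_ideal I /\ subsetM N (IM I).

Definition H_N (N : M -> Prop) (I : R -> Prop) : Prop :=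
  A_N N I /\ forall J, A_N N J -> (forall r, J r -> I r) -> (forall r, I r -> J r).

(* In(N) = intersection of IM over I in H_N (= M if H_N is empty) *)
Definition In_N (N : M -> Prop) : M -> Prop :=
  fun x => forall I, H_N N I -> IM I x.

Definition H_PS_hollow (H : (R -> Prop) -> Prop) (N : M -> Prop) : Prop :=
  PS_hollow N /\ forall I, H_N N I <-> H I.

Definition min_PS_rep (n : nat) (N : 'I_n -> M -> Prop)
    (H : 'I_n -> (R -> Prop) -> Prop) : Prop :=
  [/\ (forall i, H_PS_hollow (H i) (N i)),
      (forall x : M, sumS N x),
      (forall i j, i != j -> ~ subsetM (In_N (N i)) (In_N (N j))) &
      (forall j, ~ subsetM (N j) (sumS_but N j))].

End PSHollow.

Definition same_ideal_set (R : comNzRingType) (H H' : (R -> Prop) -> Prop) : Prop :=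
  forall I, H I <-> H' I.

Definition artinian (R : comNzRingType) : Prop :=
  forall I : nat -> R -> Prop, (forall k, is_ideal (I k)) ->
    (forall k r, I k.+1 r -> I k r) ->
    exists k0, forall k, (k0 <= k)%N -> forall r, I k r <-> I k0 r.

(* Main.v *)
Require Import Defs.
From mathcomp Require Import all_boot all_algebra.
From Stdlib Require Import Classical ClassicalEpsilon.
Set Implicit Arguments. Unset Strict Implicit. Unset Printing Implicit Defensive.
Import GRing.Theory.
Local Open Scope ring_scope.

Section S.
Variables (R : comNzRingType) (M : lmodType R).

Lemma IM0 (I : R -> Prop) : IM I (0 : M).
Proof. exists [::]; split => //; by rewrite big_nil. Qed.

Lemma IM_mono (I J : R -> Prop) (x : M) :
  (forall r, I r -> J r) -> IM I x -> IM J x.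
Proof. move=> hIJ [s [hs ->]]; exists s; split => // p /hs; exact: hIJ. Qed.

Lemma exists_min (hR : artinian R) (N : M -> Prop) (J : R -> Prop) :
  A_N N J -> exists I, H_N N I /\ (forall r, I r -> J r).
Proof.
move=> hJ; apply: NNPP => hno.
pose bad (I : R -> Prop) := A_N N I /\ (forall r, I r -> J r).
have hstep : forall t : {I | bad I}, exists t' : {I | bad I},
   (forall r, sval t' r -> sval t r) /\ ~ (forall r, sval t r -> sval t' r).
  move=> [I [hA hIJ]] /=.
  have nH : ~ H_N N I by move=> hH; apply: hno; exists I.
  have : ~ (forall J', A_N N J' -> (forall r, J' r -> I r) -> forall r, I r -> J' r).
    by move=> h; apply: nH; split.
  move=> /not_all_ex_not [J' hJ'].
  have [hA' hJ'2] := imply_to_and _ _ hJ'.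
  have [hJ'I hnot] := imply_to_and _ _ hJ'2.
  have bJ' : bad J' by split => // r /hJ'I /hIJ.
  by exists (exist _ J' bJ').
pose step t := proj1_sig (constructive_indefinite_description _ (hstep t)).
have stepP t := proj2_sig (constructive_indefinite_description _ (hstep t)).
pose t0 : {I | bad I} := exist _ J (conj hJ (fun r h => h)).
pose chain k := sval (iter k step t0).
have hc1 : forall k, is_ideal (chain k).
  move=> k; exact: (proj1 (proj1 (svalP (iter k step t0)))).
have hc2 : forall k r, chain k.+1 r -> chain k r.
  move=> k r; rewrite /chain /= => h. exact: (proj1 (stepP _)) h.
have [k0 hk0] := hR chain hc1 hc2.
apply: (proj2 (stepP (iter k0 step t0))) => r hr.
exact: (proj2 (hk0 k0.+1 (leqnSn _) r)) hr.
Qed.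

Lemma N_sub_In (N : M -> Prop) : subsetM N (In_N N).
Proof. move=> x hx I [[_ h] _]; exact: h. Qed.

Lemma A_In (hR : artinian R) (N : M -> Prop) I :
  A_N N I <-> is_ideal I /\ subsetM (In_N N) (IM I).
Proof.
split.
- move=> hA; split; first exact hA.1.
  have [I0 [hI0 sub]] := exists_min hR hA.
  move=> x hx; apply: IM_mono sub _; exact: hx I0 hI0.
- move=> [hI hs]; split => // x hx; apply: hs; exact: N_sub_In.
Qed.

Lemma H_In (hR : artinian R) (N1 N2 : M -> Prop) :
  (forall x, In_N N1 x <-> In_N N2 x) -> forall I, H_N N1 I <-> H_N N2 I.
Proof.
move=> he.
have eA : forall I, A_N N1 I <-> A_N N2 I.
  move=> I; rewrite !A_In //; split => -[hI hs]; split => // x hx; apply: hs; exact/he.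
move=> I; split => -[hA hmin]; split; try by apply/eA.
- move=> J' hJ'; apply: hmin; exact/eA.
- move=> J' hJ'; apply: hmin; exact/eA.
Qed.

Lemma In_le (hR : artinian R) (N1 N2 : M -> Prop) :
  (forall J, H_N N2 J -> subsetM N1 (IM J)) -> subsetM (In_N N1) (In_N N2).
Proof.
move=> h x hx J hJ.
have hA : A_N N1 J := conj (proj1 (proj1 hJ)) (h J hJ).
have [I0 [hI0 sub]] := exists_min hR hA.
exact: IM_mono sub (hx I0 hI0).
Qed.

Lemma key m (K : 'I_m -> M -> Prop) (N0 : M -> Prop) :
  (exists x : M, x <> 0) -> PS_hollow N0 -> (forall j, is_submodule (K j)) ->
  (forall x, sumS K x) ->
  exists j, forall J, H_N (K j) J -> subsetM N0 (IM J).
Proof.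
move=> [x0 hx0] [_ hps] hsub hsum.
apply: NNPP => hno.
have hbad : forall j, exists J, H_N (K j) J /\ ~ subsetM N0 (IM J).
  move=> j; apply: NNPP => hn; apply: hno; exists j => J hJ; apply: NNPP => hs.
  by apply: hn; exists J.
pose Jf j := proj1_sig (constructive_indefinite_description _ (hbad j)).
have JfP j : H_N (K j) (Jf j) /\ ~ subsetM N0 (IM (Jf j)) :=
  proj2_sig (constructive_indefinite_description _ (hbad j)).
pose L k := fun x : M => exists f : 'I_m -> M, (forall j, K j (f j)) /\
   x = \sum_(j < m | (k <= j)%N) f j.
have Lsub k : is_submodule (L k).
  split.
  - exists (fun _ => 0); split; first by move=> j; case: (hsub j).
    by rewrite big1.
  - move=> a b [f [hf ->]] [g [hg ->]]; exists (fun j => f j + g j); split.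
      by move=> j; case: (hsub j) => _ hadd _; apply: hadd.
    by rewrite big_split.
  - move=> r a [f [hf ->]]; exists (fun j => r *: f j); split.
      by move=> j; case: (hsub j) => _ _ hsc; apply: hsc.
    by rewrite scaler_sumr.
have hall : forall k, (k <= m)%N -> subsetM N0 (L k).
  elim=> [|k IH] hk.
  - move=> x hx; have [f [hf ->]] := hsum x; exists f; split => //.
  - have hkm : (k < m)%N := hk.
    have IHk := IH (ltnW hk).
    pose k0 := Ordinal hkm.
    have hsplit : subsetM N0 (addS (IM (Jf k0)) (L k.+1)).
      move=> x hx; have [f [hf ->]] := IHk x hx.
      exists (f k0), (\sum_(j < m | (k.+1 <= j)%N) f j); split.
        exact: ((JfP k0).1).1.2 (f k0) (hf k0).
      split; first by exists f.
      rewrite (bigD1 k0) //=; congr (_ + _); apply: eq_bigl => j /=.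
      rewrite ltn_neqAle andbC; congr (_ && _).
      by rewrite -val_eqE /= eq_sym.
    have idJ := ((JfP k0).1).1.1.
    case: (hps _ _ idJ (Lsub k.+1) hsplit) => h; [exfalso; exact: (JfP k0).2 h | exact: h].
have hm := hall m (leqnn m).
have [j0 _] : exists j : 'I_m, True.
  apply: NNPP => h; apply: hx0; have [f [_ ->]] := hsum x0.
  by apply: big1 => i _; exfalso; apply: h; exists i.
apply: (JfP j0).2 => x hx.
have [f [_ ->]] := hm x hx.
rewrite big1; first exact: IM0.
by move=> j; rewrite leqNgt ltn_ord.
Qed.

End S.

Theorem theorem5p9 (R : comNzRingType) (M : lmodType R)
    (hR : artinian R) (hM : exists x : M, x <> 0)
    (n m : nat) (N : 'I_n -> M -> Prop) (H : 'I_n -> (R -> Prop) -> Prop)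
    (K : 'I_m -> M -> Prop) (H' : 'I_m -> (R -> Prop) -> Prop)
    (hN : min_PS_rep N H) (hK : min_PS_rep K H') :
  n = m /\
  (forall i, exists j, same_ideal_set (H i) (H' j)) /\
  (forall j, exists i, same_ideal_set (H i) (H' j)) /\
  (forall i j, same_ideal_set (H i) (H' j) ->
     forall x, In_N (N i) x <-> In_N (K j) x).
Proof.
move: hN hK => [hNps hNsum hNinc hNmin] [hKps hKsum hKinc hKmin].
have subN i : is_submodule (N i) := (hNps i).1.1.
have subK j : is_submodule (K j) := (hKps j).1.1.
have c1 : forall i, exists j, forall x, In_N (N i) x <-> In_N (K j) x.
  move=> i; have [j hj] := key hM (hNps i).1 subK hKsum.
  have le1 := In_le hR hj.
  have [i' hi'] := key hM (hKps j).1 subN hNsum.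
  have le2 := In_le hR hi'.
  have ii : i' = i.
    apply: NNPP => hne; apply: (hNinc i i').
      by apply/eqP => e; apply: hne; rewrite e.
    by move=> x /le1 /le2.
  rewrite ii in le2.
  by exists j => x; split; [exact: le1 | exact: le2].
have c2 : forall j, exists i, forall x, In_N (N i) x <-> In_N (K j) x.
  move=> j; have [i hi] := key hM (hKps j).1 subN hNsum.
  have le1 := In_le hR hi.
  have [j' hj'] := key hM (hNps i).1 subK hKsum.
  have le2 := In_le hR hj'.
  have jj : j' = j.
    apply: NNPP => hne; apply: (hKinc j j').
      by apply/eqP => e; apply: hne; rewrite e.
    by move=> x /le1 /le2.
  rewrite jj in le2.
  by exists i => x; split; [exact: le2 | exact: le1].
have sis : forall i j, (forall x, In_N (N i) x <-> In_N (K j) x) ->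
    same_ideal_set (H i) (H' j).
  move=> i j he I.
  rewrite -(proj2 (hNps i) I) -(proj2 (hKps j) I); exact: H_In.
split; last split; last split.
- pose f i := proj1_sig (constructive_indefinite_description _ (c1 i)).
  have fP i : forall x, In_N (N i) x <-> In_N (K (f i)) x :=
    proj2_sig (constructive_indefinite_description _ (c1 i)).
  pose g j := proj1_sig (constructive_indefinite_description _ (c2 j)).
  have gP j : forall x, In_N (N (g j)) x <-> In_N (K j) x :=
    proj2_sig (constructive_indefinite_description _ (c2 j)).
  have finj : injective f.
    move=> i1 i2 e; apply: NNPP => hne; apply: (hNinc i1 i2).
      by apply/eqP.
    by move=> x /(fP i1); rewrite e => /(fP i2).
  have ginj : injective g.
    move=> j1 j2 e; apply: NNPP => hne; apply: (hKinc j1 j2).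
      by apply/eqP.
    by move=> x /(gP j1); rewrite e => /(gP j2).
  have := leq_card f finj; have := leq_card g ginj; rewrite !card_ord => h1 h2.
  by apply/eqP; rewrite eqn_leq h1 h2.
- move=> i; have [j hj] := c1 i; exists j; exact: sis.
- move=> j; have [i hi] := c2 j; exists i; exact: sis.
- move=> i j hs x; split => h I hI; apply: h.
  + by apply/(proj2 (hNps i) I)/hs/(proj2 (hKps j) I).
  + by apply/(proj2 (hKps j) I)/hs/(proj2 (hNps i) I).
Qed.
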